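(* Let $\mathcal{G}=(\mathcal{V},\mathcal{E})$ be a strongly connected digraph and let $\{\mathbf{A}(k)\}_{k\in\mathbb{Z}_+}$ be the sequence of weight matrices generated by the distributed quantized weight-balancing algorithm described in the context, with the step-size $\gamma(k)=2^{-n}$ for $2^n-1\le k\le 2^{n+1}-2$, $n\in\mathbb{Z}_+$. Then: (a) (Asymptotic convergence) $\lim_{k\to\infty}\mathbf{A}(k)=\mathbf{A}^\infty$ for some matrix $\mathbf{A}^\infty$ that makes the digraph weight-balanced, i.e. with $\mathbf{A}^\infty$ every node $i$ satisfies $\sum_{j\in\mathcal{N}_i^-}a^\infty_{ij}=\sum_{j\in\mathcal{N}_i^+}a^\infty_{ji}$; (b) (Convergence rate) $\Vert\boldsymbol{\epsilon}(k)\Vert_1=O(1/k)$ as $k\to\infty$.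
   Context: $\mathcal{G}=(\mathcal{V},\mathcal{E})$ is a directed graph with $\mathcal{V}=\{1,\dots,N\}$, no self-loops; $(i,j)\in\mathcal{E}$ denotes an edge from $i$ to $j$. In-neighbors $\mathcal{N}_i^-=\{j:(j,i)\in\mathcal{E}\}$, out-neighbors $\mathcal{N}_i^+=\{j:(i,j)\in\mathcal{E}\}$, out-degree $d_i^+=|\mathcal{N}_i^+|$. Strongly connected means there is a directed path from every node to every other node. A weight matrix $\mathbf{A}=(a_{ij})$ is compliant with $\mathcal{G}$: $a_{ij}\ge 0$ if $(j,i)\in\mathcal{E}$ and $a_{ij}=0$ otherwise. Algorithm: initialize $a_{ij}(0)=1$ if $j\in\mathcal{N}_i^-$ and $a_{ij}(0)=0$ otherwise. At iteration $k$, define the balance $b_i(k)=\sum_{j\in\mathcal{N}_i^-}a_{ij}(k)-\sum_{j\in\mathcal{N}_i^+}a_{ji}(k)$; each node $i$ computes the bit $n_i(k)=1$ if $b_i(k)\ge d_i^+\gamma(k)$ and $n_i(k)=0$ otherwise, and broadcasts it to its out-neighbors; then each node $i$ updates $a_{ij}(k+1)=a_{ij}(k)+n_j(k)\gamma(k)$ for all $j\in\mathcal{N}_i^-$ (other entries stay $0$). The imbalance vector is $\boldsymbol{\epsilon}(k)=(|b_i(k)|)_{i=1}^N$. *)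

(* Defs.v *)
From HB Require Import structures.
From mathcomp Require Import all_boot all_order all_algebra.
From mathcomp Require Import all_classical all_reals all_analysis.
Set Implicit Arguments. Unset Strict Implicit. Unset Printing Implicit Defensive.
Import Order.TTheory GRing.Theory Num.Theory.
Local Open Scope ring_scope.

(* Digraph on nodes 'I_N, given by E : rel 'I_N; E i j means edge (i,j) from i to j. *)
Section Algo.
Variables (R : realType) (N : nat) (E : rel 'I_N).

(* step size gamma(k) = 2^-n for 2^n - 1 <= k <= 2^(n+1) - 2, i.e. n = floor(log2 (k+1)) *)
Definition gamma (k : nat) : R := (2%:R ^+ (trunc_log 2 k.+1))^-1.

Definition outdeg (i : 'I_N) : nat := #|[set j | E i j]|.

Definition balance (a : 'I_N -> 'I_N -> R) (i : 'I_N) : R :=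
  \sum_(j | E j i) a i j - \sum_(j | E i j) a j i.

Definition bit (a : 'I_N -> 'I_N -> R) (g : R) (i : 'I_N) : bool :=
  (outdeg i)%:R * g <= balance a i.

Definition A0 (i j : 'I_N) : R := if E j i then 1 else 0.

Definition step (a : 'I_N -> 'I_N -> R) (g : R) (i j : 'I_N) : R :=
  if E j i then a i j + (if bit a g j then g else 0) else a i j.

Fixpoint Aseq (k : nat) : 'I_N -> 'I_N -> R :=
  match k with
  | 0%N => A0
  | k'.+1 => step (Aseq k') (gamma k')
  end.

Definition imbalance_norm1 (k : nat) : R := \sum_i `|balance (Aseq k) i|.

End Algo.

Definition strongly_connected (N : nat) (E : rel 'I_N) : Prop :=
  forall i j : 'I_N, connect E i j.

Definition compliant (R : realType) (N : nat) (E : rel 'I_N) (a : 'I_N -> 'I_N -> R) : Prop :=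
  forall i j : 'I_N, (E j i -> 0 <= a i j) /\ (~~ E j i -> a i j = 0).

Definition weight_balanced (R : realType) (N : nat) (E : rel 'I_N) (a : 'I_N -> 'I_N -> R) : Prop :=
  forall i : 'I_N, \sum_(j | E j i) a i j = \sum_(j | E i j) a j i.

(* Main.v *)
Require Import Defs.
From HB Require Import structures.
From mathcomp Require Import all_boot all_order all_algebra.
From mathcomp Require Import all_classical all_reals all_analysis.
From mathcomp Require Import ring lra zify.
From Stdlib Require Classical.
Import Order.TTheory GRing.Theory Num.Theory.
Import numFieldNormedType.Exports.
Local Open Scope ring_scope.
Set Implicit Arguments. Unset Strict Implicit.

Section Basics.
Variables (R : realType) (N : nat) (E : rel 'I_N).

Definition fires (k : nat) (i : 'I_N) : bool := bit E (Aseq R E k) (gamma R k) i.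
Definition inc (k : nat) (i : 'I_N) : R := if fires k i then gamma R k else 0.
Definition ff (i : 'I_N) (k : nat) : R := \sum_(0 <= t < k) inc t i.
Definition bb (k : nat) (i : 'I_N) : R := balance E (Aseq R E k) i.
Definition dd (i : 'I_N) : R := (outdeg E i)%:R.
Definition MM (k : nat) : R := imbalance_norm1 R E k.

Lemma gamma_gt0 k : 0 < gamma R k.
Proof. by rewrite /gamma invr_gt0 exprn_gt0 // ltr0n. Qed.

Lemma inc_ge0 k i : 0 <= inc k i.
Proof. rewrite /inc; case: ifP => _ //; exact: ltW (gamma_gt0 k). Qed.

Lemma ffS i k : ff i k.+1 = ff i k + inc k i.
Proof. by rewrite /ff big_nat_recr. Qed.

Lemma ff0 i : ff i 0 = 0.
Proof. by rewrite /ff big_geq. Qed.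

Lemma Aseq_edge k i j : E j i -> Aseq R E k i j = 1 + ff j k.
Proof.
move=> hE; elim: k => [|k IH]; first by rewrite /= /A0 hE ff0 addr0.
by rewrite /= /step hE IH ffS /inc /fires addrA.
Qed.

Lemma Aseq_nonedge k i j : ~~ E j i -> Aseq R E k i j = 0.
Proof.
move=> hE; elim: k => [|k IH]; first by rewrite /= /A0 (negbTE hE).
by rewrite /= /step (negbTE hE) IH.
Qed.

Lemma sum_out_const i (c : R) : \sum_(j | E i j) c = dd i * c.
Proof.
rewrite (eq_bigl (fun j => j \in [set j | E i j])); last by move=> j; rewrite inE.
by rewrite sumr_const /dd /outdeg mulr_natl.
Qed.

Lemma bb_formula k i :
  bb k i = \sum_(j | E j i) (1 + ff j k) - dd i * (1 + ff i k).
Proof.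
rewrite /bb /balance [X in X - _](eq_bigr (fun j => 1 + ff j k)); last first.
  by move=> j hj; rewrite Aseq_edge.
rewrite [X in _ - X](eq_bigr (fun j => 1 + ff i k)); last first.
  by move=> j hj; rewrite Aseq_edge.
by rewrite sum_out_const.
Qed.

Lemma balance_sum0 (a : 'I_N -> 'I_N -> R) : \sum_i balance E a i = 0.
Proof.
rewrite /balance sumrB; apply/eqP; rewrite subr_eq0; apply/eqP.
rewrite (eq_bigr (fun i => \sum_j (if E j i then a i j else 0))); last by move=> i _; rewrite big_mkcond.
rewrite [RHS](eq_bigr (fun i => \sum_j (if E i j then a j i else 0))); last by move=> i _; rewrite big_mkcond.
by rewrite [RHS]exchange_big.
Qed.

Lemma bb_sum0 k : \sum_i bb k i = 0.
Proof. exact: balance_sum0. Qed.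


Lemma ff_mono i k k' : (k <= k')%N -> ff i k <= ff i k'.
Proof.
move=> /subnK <-; elim: (k' - k)%N => [|m IH]; first by rewrite add0n.
by rewrite addSn ffS (le_trans IH) // lerDl inc_ge0.
Qed.

Lemma bb_diff k k' i :
  bb k' i - bb k i = \sum_(j | E j i) (ff j k' - ff j k) - dd i * (ff i k' - ff i k).
Proof.
rewrite !bb_formula.
have -> : \sum_(j | E j i) (ff j k' - ff j k) =
   \sum_(j | E j i) (1 + ff j k') - \sum_(j | E j i) (1 + ff j k).
  by rewrite -sumrB; apply: eq_bigr => j _; lra.
lra.
Qed.

Lemma bbS k i : bb k.+1 i = bb k i + \sum_(j | E j i) inc k j - dd i * inc k i.
Proof.
have := bb_diff k k.+1 i.
rewrite (eq_bigr (fun j => inc k j)); last by move=> j _; rewrite ffS; lra.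
rewrite ffS; lra.
Qed.

Lemma dd_ge0 i : 0 <= dd i.
Proof. by rewrite /dd ler0n. Qed.

Lemma fires_next k i : fires k i -> 0 <= bb k.+1 i.
Proof.
move=> hf; rewrite bbS {2}/inc hf.
have h1 : dd i * gamma R k <= bb k i by move: hf; rewrite /fires /bit.
have h2 : 0 <= \sum_(j | E j i) inc k j by apply: sumr_ge0 => j _; exact: inc_ge0.
lra.
Qed.

Lemma nofire_next k i : ~~ fires k i -> bb k i <= bb k.+1 i.
Proof.
move=> hf; rewrite bbS {2}/inc (negbTE hf) mulr0 subr0.
have h2 : 0 <= \sum_(j | E j i) inc k j by apply: sumr_ge0 => j _; exact: inc_ge0.
lra.
Qed.

Lemma bb_next_ge0 k i : 0 <= bb k i -> 0 <= bb k.+1 i.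
Proof.
case hf: (fires k i); first by move=> _; exact: fires_next.
move=> h; apply: (le_trans h); apply: nofire_next; by rewrite hf.
Qed.

Lemma persist k m i : 0 <= bb k i -> 0 <= bb (k + m) i.
Proof.
move=> h; elim: m => [|m IH]; first by rewrite addn0.
by rewrite addnS; apply: bb_next_ge0.
Qed.

Lemma persist_le k k' i : (k <= k')%N -> 0 <= bb k i -> 0 <= bb k' i.
Proof. by move=> /subnK <- h; rewrite addnC; apply: persist. Qed.

Lemma MM_alt k : MM k = \sum_i (`|bb k i| - bb k i).
Proof. by rewrite sumrB bb_sum0 subr0. Qed.

Lemma MM_S k : MM k.+1 <= MM k.
Proof.
rewrite !MM_alt; apply: ler_sum => i _.
case hf: (fires k i).
  have h := @fires_next k i hf; rewrite (ger0_norm h) subrr subr_ge0; exact: ler_norm.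
have h : bb k i <= bb k.+1 i by apply: nofire_next; rewrite hf.
case: (lerP 0 (bb k.+1 i)) => h1.
  rewrite (ger0_norm h1) subrr subr_ge0; exact: ler_norm.
have h2 : bb k i < 0 by apply: le_lt_trans h1.
rewrite (ltr0_norm h1) (ltr0_norm h2); lra.
Qed.

Lemma MM_mono k k' : (k <= k')%N -> MM k' <= MM k.
Proof.
move=> /subnK <-; elim: (k' - k)%N => [|m IH]; first by rewrite add0n.
by rewrite addSn (le_trans (MM_S _)).
Qed.

Lemma MM_ge0 k : 0 <= MM k.
Proof. by apply: sumr_ge0 => i _. Qed.

Lemma bb_le_MM k i : `|bb k i| <= MM k.
Proof.
rewrite /MM /imbalance_norm1 (bigD1 i) //= lerDl.
by apply: sumr_ge0 => j _.
Qed.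

Lemma dd_le i : dd i <= N%:R.
Proof.
rewrite /dd ler_nat /outdeg; apply: leq_trans (max_card _) _.
by rewrite card_ord.
Qed.


Section PropS.
Variables (D : 'I_N -> R) (beta : R) (v : 'I_N).
Hypotheses (HD : forall i, 0 <= D i) (Hv : D v = 0) (Hb : 0 <= beta)
  (Hflow : forall i, \sum_(j | E j i) D j - dd i * D i <= beta).

Lemma prop_path p : forall x, path E x p -> last x p = v ->
  D x <= beta * (N.+1)%:R ^+ size p.
Proof.
elim: p => [|y p IH] x /=; first by move=> _ ->; rewrite Hv expr0 mulr1.
move=> /andP[hxy hp] hl.
have hy := IH y hp hl.
set P := (N.+1)%:R ^+ size p in hy *.
have hP : 1 <= P by apply: exprn_ege1; rewrite ler1n.
have h1 : D x <= \sum_(j | E j y) D j.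
  by rewrite (bigD1 x) //= lerDl; apply: sumr_ge0 => j _.
have h2 := Hflow y.
have h3 : dd y * D y <= N%:R * D y by apply: ler_wpM2r => //; exact: dd_le.
have h4 : N%:R * D y <= N%:R * (beta * P) by apply: ler_wpM2l => //; rewrite ler0n.
have h5 : beta <= beta * P by rewrite -{1}(mulr1 beta); apply: ler_wpM2l.
have -> : (N.+1)%:R ^+ (size p).+1 = P * (N%:R + 1) :> R by rewrite exprSr natr1.
have -> : beta * (P * (N%:R + 1)) = beta * P + N%:R * (beta * P) by ring.
lra.
Qed.

Lemma prop_bound (Hsc : strongly_connected E) i : D i <= beta * (N.+1)%:R ^+ N.
Proof.
move: (Hsc i v) => /connectP [p hp hl].
move: hl; case/shortenP: hp => p' hp' hu _ hl.
apply: (le_trans (@prop_path p' i hp' (esym hl))).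
apply: ler_wpM2l => //; apply: ler_weXn2l; first by rewrite ler1n.
have /card_uniqP hs := hu.
have := max_card (mem (i :: p')); rewrite hs card_ord /=; exact: ltnW.
Qed.

Lemma prop_sum (Hsc : strongly_connected E) :
  \sum_i D i <= N%:R * (beta * (N.+1)%:R ^+ N).
Proof.
have -> : N%:R * (beta * (N.+1)%:R ^+ N) = \sum_(i : 'I_N) (beta * (N.+1)%:R ^+ N).
  by rewrite sumr_const card_ord mulr_natl.
by apply: ler_sum => i _; exact: prop_bound.
Qed.

End PropS.


Lemma freeze k : (forall i j, E j i -> ~~ fires k j) -> Aseq R E k.+1 = Aseq R E k.
Proof.
move=> H; apply/funext => i; apply/funext => j.
rewrite /= /step; case: ifP => h //.
by move: (H _ _ h); rewrite /fires => /negbTE ->; rewrite addr0.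
Qed.

Lemma freeze_block t e : (forall i, ~~ fires t i) ->
  (forall t', (t <= t' < e)%N -> gamma R t' = gamma R t) ->
  forall m, (t + m <= e)%N -> Aseq R E (t + m) = Aseq R E t.
Proof.
move=> H Hg; elim=> [|m IH] hm; first by rewrite addn0.
have hm' : (t + m <= e)%N by apply: leq_trans hm; rewrite leq_add2l.
rewrite addnS freeze ?IH //.
move=> i j _; rewrite /fires IH // Hg; first exact: H.
by rewrite leq_addr /= -addnS.
Qed.

Lemma dd_gt0 i j : E j i -> 0 < dd j.
Proof.
move=> h; rewrite /dd ltr0n /outdeg; apply/card_gt0P; exists i; by rewrite inE.
Qed.

Lemma zero_forever t : (forall i, bb t i = 0) ->
  forall m, Aseq R E (t + m) = Aseq R E t.
Proof.
move=> H; elim=> [|m IH]; first by rewrite addn0.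
rewrite addnS freeze ?IH //.
move=> i j hji; rewrite /fires /bit.
have -> : balance E (Aseq R E (t + m)) j = 0 by rewrite IH; exact: H.
have hp : 0 < dd j * gamma R (t + m) by apply: mulr_gt0; [exact: dd_gt0 hji|exact: gamma_gt0].
by rewrite -ltNge.
Qed.

Lemma all_fired_zero s e : (forall i, exists t, (s <= t < e)%N /\ fires t i) ->
  forall i, bb e i = 0.
Proof.
move=> H.
have hge : forall i, 0 <= bb e i.
  move=> i; case: (H i) => t [/andP[_ hte] hf].
  exact: (persist_le hte (fires_next hf)).
move=> i; apply: (@psumr_eq0P _ _ xpredT (bb e)) => //; exact: bb_sum0.
Qed.

Lemma ff_diff i s e : (s <= e)%N -> ff i e - ff i s = \sum_(s <= t < e) inc t i.
Proof.
move=> hse; rewrite /ff (@big_cat_nat _ _ _ s 0 e) //=; lra.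
Qed.

Lemma silent_delta v s e : (s <= e)%N ->
  (forall t, (s <= t < e)%N -> ~~ fires t v) -> ff v e - ff v s = 0.
Proof.
move=> hse H; rewrite ff_diff //; apply: big1_seq => t /andP[_].
rewrite mem_index_iota => ht; by rewrite /inc (negbTE (H t ht)).
Qed.

Lemma count_lb s e c : (s <= e)%N ->
  (forall t, (s <= t < e)%N -> gamma R t = c) ->
  (forall t, (s <= t < e)%N -> exists i, fires t i) ->
  (e - s)%:R * c <= \sum_i (ff i e - ff i s).
Proof.
move=> hse Hg Hf.
rewrite (eq_bigr (fun i => \sum_(s <= t < e) inc t i)); last by move=> i _; rewrite ff_diff.
rewrite exchange_big /= mulr_natl -sumr_const_nat.
apply: ler_sum_nat => t ht.
case: (Hf t ht) => i hi.
rewrite (bigD1 i) //= {1}/inc hi Hg // lerDl.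
by apply: sumr_ge0 => j _; exact: inc_ge0.
Qed.


Definition sb n := (2 ^ n).-1.

Lemma sbS n : (sb n).+1 = (2 ^ n)%N.
Proof. by rewrite /sb prednK // expn_gt0. Qed.

Lemma gamma_blk n k : (sb n <= k < sb n.+1)%N -> gamma R k = ((2:R) ^+ n)^-1.
Proof.
move=> /andP[h1 h2]; rewrite /gamma (@trunc_log_eq 2 n) //.
by rewrite -sbS ltnS h1 -(sbS n.+1) ltnS.
Qed.

Lemma sb_len n : (sb n.+1 - sb n)%N = (2 ^ n)%N.
Proof. have h1 := sbS n; have h2 := sbS n.+1; rewrite expnS in h2; lia. Qed.

Lemma sb_le n : (sb n <= sb n.+1)%N.
Proof. have h1 := sbS n; have h2 := sbS n.+1; rewrite expnS in h2; lia. Qed.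

Lemma n_le_sb n : (n <= sb n)%N.
Proof. by rewrite -ltnS sbS ltn_expl. Qed.

Definition KN : R := 2 * N%:R * (N.+1)%:R ^+ N.

Lemma stab (Hsc : strongly_connected E) n : MM (sb n) * KN < 1 ->
  forall i, bb (sb n.+1) i <= dd i * ((2:R) ^+ n)^-1.
Proof.
move=> Hsmall.
set s := sb n; set e := sb n.+1; set c := ((2:R) ^+ n)^-1.
have hse : (s <= e)%N by exact: sb_le.
have Hg : forall t, (s <= t < e)%N -> gamma R t = c by move=> t ht; exact: gamma_blk.
have hc : 0 <= c by rewrite /c invr_ge0 exprn_ge0.
case: (Classical_Prop.classic (exists t, (s <= t < e)%N /\ forall i, ~~ fires t i)) =>
  [[t [ht Hnf]]|Hn1].
  have hte : (t <= e)%N by case/andP: ht => _ /ltnW.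
  have hA : Aseq R E e = Aseq R E t.
    have Hg' : forall t', (t <= t' < e)%N -> gamma R t' = gamma R t.
      move=> t' /andP[h1 h2]; have /andP[hs1 hs2] := ht.
      rewrite (Hg t') ?(Hg t) ?hs1 ?hs2 //.
      by rewrite (leq_trans hs1 h1) h2.
    have hm : (t + (e - t))%N = e by rewrite subnKC.
    have := @freeze_block t e Hnf Hg' (e - t); rewrite hm; apply; exact: leqnn.
  move=> i; rewrite /bb hA; have := Hnf i; rewrite /fires /bit -ltNge (Hg t ht) => h.
  exact: ltW.
have Hf : forall t, (s <= t < e)%N -> exists i, fires t i.
  move=> t ht; case: (Classical_Prop.classic (exists i, fires t i)) => // hn.
  exfalso; apply: Hn1; exists t; split=> // i; apply/negP => hi; apply: hn; by exists i.
case: (Classical_Prop.classic (forall i, exists t, (s <= t < e)%N /\ fires t i)) => [Hall|Hn2].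
  move=> i; rewrite (all_fired_zero Hall); apply: mulr_ge0 => //; exact: dd_ge0.
exfalso.
case: (Classical_Pred_Type.not_all_ex_not _ _ Hn2) => v hv.
have Hsil : forall t, (s <= t < e)%N -> ~~ fires t v.
  move=> t ht; apply/negP => hf; apply: hv; by exists t.
pose D := fun i => ff i e - ff i s.
have HD : forall i, 0 <= D i by move=> i; rewrite /D subr_ge0; exact: ff_mono.
have Hv : D v = 0 by rewrite /D; exact: silent_delta.
have Hb : 0 <= 2 * MM s by rewrite mulr_ge0 // MM_ge0.
have Hflow : forall i, \sum_(j | E j i) D j - dd i * D i <= 2 * MM s.
  move=> i; rewrite /D -bb_diff.
  have h1 := bb_le_MM e i; have h2 := bb_le_MM s i; have h3 := MM_mono hse.
  have h4 := ler_norm (bb e i); have h5 := ler_norm (- bb s i); rewrite normrN in h5.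
  lra.
have hsum := prop_sum HD Hv Hb Hflow Hsc.
have hlb := count_lb hse Hg Hf.
rewrite sb_len natrX mulfV in hlb; last by rewrite expf_neq0.
have : N%:R * (2 * MM s * (N.+1)%:R ^+ N) = MM s * KN by rewrite /KN; ring.
move: Hsmall; rewrite -/s. lra.
Qed.

Lemma Mbound e c : 0 <= c -> (forall i, bb e i <= dd i * c) ->
  MM e <= N%:R * (2 * N%:R * c).
Proof.
move=> hc H.
have -> : MM e = \sum_i (`|bb e i| + bb e i) by rewrite big_split /= bb_sum0 addr0.
have -> : N%:R * (2 * N%:R * c) = \sum_(i : 'I_N) (2 * N%:R * c).
  by rewrite sumr_const card_ord mulr_natl.
apply: ler_sum => i _.
have h1 := H i; have h2 : dd i * c <= N%:R * c by apply: ler_wpM2r => //; exact: dd_le.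
have h3 : 0 <= dd i * c by rewrite mulr_ge0 // dd_ge0.
case: (lerP 0 (bb e i)) => h.
  rewrite ger0_norm //; lra.
rewrite ltr0_norm //; lra.
Qed.


Lemma silent_bound (Hsc : strongly_connected E) s e v : (s <= e)%N ->
  (forall t, (s <= t < e)%N -> ~~ fires t v) ->
  \sum_i (ff i e - ff i s) <= MM s * KN.
Proof.
move=> hse Hsil.
pose D := fun i => ff i e - ff i s.
have HD : forall i, 0 <= D i by move=> i; rewrite /D subr_ge0; exact: ff_mono.
have Hv : D v = 0 by rewrite /D; exact: silent_delta.
have Hb : 0 <= 2 * MM s by rewrite mulr_ge0 // MM_ge0.
have Hflow : forall i, \sum_(j | E j i) D j - dd i * D i <= 2 * MM s.
  move=> i; rewrite /D -bb_diff.
  have h1 := bb_le_MM e i; have h2 := bb_le_MM s i; have h3 := MM_mono hse.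
  have h4 := ler_norm (bb e i); have h5 := ler_norm (- bb s i); rewrite normrN in h5.
  lra.
have hsum := prop_sum HD Hv Hb Hflow Hsc.
have : N%:R * (2 * MM s * (N.+1)%:R ^+ N) = MM s * KN by rewrite /KN; ring.
rewrite /D in hsum; lra.
Qed.

Lemma fin_bound (P : nat -> 'I_N -> Prop) : (forall v, exists t, P t v) ->
  exists T, forall v, exists t, (t < T)%N /\ P t v.
Proof.
move=> H.
have : forall sq : seq 'I_N, exists T, forall v, v \in sq -> exists t, (t < T)%N /\ P t v.
  elim=> [|x sq [T HT]]; first by exists 0%N.
  case: (H x) => tx hx; exists (maxn T tx.+1) => v; rewrite inE => /orP[/eqP ->|hv].
    by exists tx; split => //; rewrite leq_max leqnn orbT.
  case: (HT v hv) => t [ht hp]; exists t; split => //.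
  by rewrite leq_max ht.
case/(_ (enum 'I_N)) => T HT; exists T => v; apply: HT; by rewrite mem_enum.
Qed.

Lemma exists_pos k : (0 < N)%N -> 0 < MM k -> exists i, MM k <= 2 * N%:R * bb k i.
Proof.
move=> hN hM.
case: (Classical_Prop.classic (exists i, MM k <= 2 * N%:R * bb k i)) => // hn.
exfalso.
have hNr : 0 < N%:R :> R by rewrite ltr0n.
have Hlt : forall i, N%:R * (`|bb k i| + bb k i) < MM k.
  move=> i; have : ~ (MM k <= 2 * N%:R * bb k i) by move=> h; apply: hn; exists i.
  move/negP; rewrite -ltNge => h.
  case: (lerP 0 (bb k i)) => hb; [rewrite ger0_norm //; lra | rewrite ltr0_norm //].
  have -> : - bb k i + bb k i = 0 by ring.
  by rewrite mulr0.
have hsum : \sum_i N%:R * (`|bb k i| + bb k i) < \sum_(i : 'I_N) MM k.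
  apply: ltr_sum => //; apply/hasP; exists (Ordinal hN) => //; by rewrite mem_enum.
move: hsum; rewrite -mulr_sumr big_split /= bb_sum0 addr0 sumr_const card_ord.
have -> : \sum_i `|bb k i| = MM k by [].
have -> : MM k *+ N = N%:R * MM k by rewrite mulr_natl.
move=> h; lra.
Qed.


Lemma ff_ge0 i k : 0 <= ff i k.
Proof. by rewrite -(ff0 i) ff_mono. Qed.

Lemma MM_zero t : (forall i, bb t i = 0) -> MM t = 0.
Proof.
move=> hz; rewrite /MM /imbalance_norm1; apply: big1 => i _.
by have := hz i; rewrite /bb => ->; rewrite normr0.
Qed.

Lemma ex_small (Hsc : strongly_connected E) : exists k1, MM k1 * KN < 1.
Proof.
case: (Classical_Prop.classic (exists k1, MM k1 * KN < 1)) => // Hn; exfalso.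
have H : forall k, 1 <= MM k * KN.
  move=> k; rewrite leNgt; apply/negP => h; apply: Hn; by exists k.
have hN : (0 < N)%N.
  rewrite lt0n; apply/negP => /eqP h0.
  have hr : N%:R = 0 :> R by rewrite h0.
  have := H 0%N; rewrite /KN hr mulr0 mul0r mulr0; lra.
have hKN : 0 < KN.
  by rewrite /KN !mulr_gt0 // ?ltr0n // exprn_gt0 // ltr0n.
have hMpos : forall k, 0 < MM k.
  move=> k; have := H k; rewrite -(pmulr_lgt0 _ hKN) => h; lra.
have Hphi : forall t, \sum_i ff i t <= MM 0%N * KN.
  move=> t.
  case: (Classical_Prop.classic (forall i, exists tau, (0 <= tau < t)%N /\ fires tau i))
    => [Hall|Hn2].
    have := H t; rewrite MM_zero; first by rewrite mul0r; lra.
    exact: all_fired_zero Hall.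
  case: (Classical_Pred_Type.not_all_ex_not _ _ Hn2) => v hv.
  have Hsil : forall tau, (0 <= tau < t)%N -> ~~ fires tau v.
    move=> tau ht; apply/negP => hf; apply: hv; by exists tau.
  have := silent_bound Hsc (leq0n t) Hsil.
  by under eq_bigr do rewrite ff0 subr0.
pose Kn := (2 * N * N * (2 * N * N.+1 ^ N))%N.
have hKn : (Kn%:R : R) = 2 * N%:R * N%:R * KN.
  by rewrite /Kn /KN !natrM natrX.
have Hfire : forall n, (Kn <= n)%N -> forall t, (sb n <= t < sb n.+1)%N -> exists i, fires t i.
  move=> n hn t ht.
  case: (exists_pos hN (hMpos t)) => i hb; exists i.
  rewrite /fires /bit (gamma_blk ht).
  set c := ((2:R) ^+ n)^-1.
  have hc0 : 0 < c by rewrite /c invr_gt0 exprn_gt0.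
  have hKn2 : (Kn <= 2 ^ n)%N.
    apply: ltnW; apply: (leq_trans (ltn_expl Kn (ltnSn 1))).
    by rewrite leq_pexp2l.
  have hcK : c * Kn%:R <= 1.
    have : (Kn%:R : R) <= (2 ^ n)%:R by rewrite ler_nat.
    rewrite natrX => h.
    have := ler_wpM2l (ltW hc0) h; rewrite mulVf //; exact: expf_neq0.
  have h1 : 2 * N%:R * N%:R * c * KN <= MM t * KN.
    apply: le_trans (H t); move: hcK; rewrite hKn.
    have -> : c * (2 * N%:R * N%:R * KN) = 2 * N%:R * N%:R * c * KN by ring.
    done.
  have h2 : 2 * N%:R * N%:R * c <= MM t by rewrite -(ler_pM2r hKN).
  have h3 : N%:R * (dd i * c) <= N%:R * (N%:R * c).
    apply: ler_wpM2l; first by rewrite ler0n.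
    by apply: ler_wpM2r; [exact: ltW|exact: dd_le].
  have h4 : (2 * N%:R) * (dd i * c) <= (2 * N%:R) * bb t i by lra.
  by rewrite ler_pM2l ?mulr_gt0 ?ltr0n in h4.
have Hgrow : forall m, m%:R <= \sum_i ff i (sb (Kn + m)).
  elim=> [|m IH]; first by rewrite sumr_ge0 // => i _; exact: ff_ge0.
  have hle : (Kn <= Kn + m)%N by exact: leq_addr.
  have := count_lb (sb_le (Kn + m)) (fun t ht => gamma_blk ht) (Hfire _ hle).
  rewrite sb_len natrX mulfV; last exact: expf_neq0.
  rewrite sumrB addnS -natr1; lra.
have hb := archi_boundP (mulr_ge0 (MM_ge0 0) (ltW hKN)).
have := Hgrow (Num.Def.archi_bound (MM 0%N * KN)).
have := Hphi (sb (Kn + Num.Def.archi_bound (MM 0%N * KN))).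
lra.
Qed.


Lemma Aseq_mono i j k k' : (k <= k')%N -> Aseq R E k i j <= Aseq R E k' i j.
Proof.
move=> hk; case hE: (E j i).
  by rewrite !Aseq_edge // lerD2l ff_mono.
by rewrite !Aseq_nonedge ?hE.
Qed.

Lemma wbound (Hsc : strongly_connected E) i j : exists W, forall k, Aseq R E k i j <= W.
Proof.
case hE: (E j i); last by exists 0 => k; rewrite Aseq_nonedge ?hE.
case: (Classical_Prop.classic (exists v, forall t, ~~ fires t v)) => [[v hv]|hn].
  exists (1 + MM 0%N * KN) => k; rewrite Aseq_edge // lerD2l.
  have := silent_bound Hsc (leq0n k) (fun t _ => hv t).
  under eq_bigr do rewrite ff0 subr0.
  apply: le_trans; rewrite (bigD1 j) //= lerDl.
  by apply: sumr_ge0 => l _; exact: ff_ge0.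
have Hall : forall v, exists t, fires t v.
  move=> v; case: (Classical_Prop.classic (exists t, fires t v)) => // h.
  exfalso; apply: hn; exists v => t; apply/negP => hf; apply: h; by exists t.
case: (fin_bound Hall) => T HT.
have hz : forall l, bb T l = 0.
  apply: (@all_fired_zero 0%N) => l; case: (HT l) => t [ht hf]; by exists t.
exists (Aseq R E T i j) => k.
case: (leqP k T) => hk; first exact: Aseq_mono.
have := zero_forever hz (k - T); rewrite subnKC ?(ltnW hk) // => ->.
by [].
Qed.

Lemma rate (Hsc : strongly_connected E) : exists C K, 0 <= C /\ (0 < K)%N /\
  forall k, (K <= k)%N -> MM k <= C / k%:R.
Proof.
case: (ex_small Hsc) => k1 hk1.
have hKN0 : 0 <= KN by rewrite /KN !mulr_ge0 // ?ler0n // exprn_ge0 // ler0n.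
have Hst : forall m, (k1 <= m)%N -> MM (sb m.+1) <= N%:R * (2 * N%:R * ((2:R) ^+ m)^-1).
  move=> m hm; apply: Mbound; first by rewrite invr_ge0 exprn_ge0.
  apply: (@stab Hsc m).
  apply: le_lt_trans hk1; apply: ler_wpM2r => //; apply: MM_mono.
  exact: leq_trans hm (n_le_sb m).
have hK : (0 < sb k1.+1)%N.
  have h1 := sbS k1.+1; have h2 := expn_gt0 2 k1; rewrite expnS in h1; lia.
exists (8 * N%:R * N%:R), (sb k1.+1); split; first by rewrite !mulr_ge0 // ler0n.
split=> // k hk.
have hkpos : (0 < k)%N by apply: leq_trans hK hk.
have /andP[hn1 hn2] := @trunc_log_bounds 2 k.+1 isT isT.
have hn : (k1.+1 <= trunc_log 2 k.+1)%N.
  apply: trunc_log_max => //; by rewrite -sbS ltnS.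
move: hn hn1 hn2; case: (trunc_log 2 k.+1) => [//|m] hm hm1 hm2.
have hMk : MM k <= MM (sb m.+1) by apply: MM_mono; rewrite -ltnS sbS.
have hA := le_trans hMk (Hst m hm).
set y := (2:R) ^+ m in hA.
have hy : y != 0 by rewrite /y expf_neq0.
have hk4n : (k <= 4 * 2 ^ m)%N by rewrite !expnS in hm2; lia.
have hk4 : k%:R <= 4 * y by rewrite /y -natrX -(natrM R 4) ler_nat.
rewrite ler_pdivlMr ?ltr0n //.
have hB : MM k * k%:R <= (N%:R * (2 * N%:R * y^-1)) * k%:R by apply: ler_wpM2r => //; rewrite ler0n.
have hC : (N%:R * (2 * N%:R * y^-1)) * k%:R <= (N%:R * (2 * N%:R * y^-1)) * (4 * y).
  apply: ler_wpM2l => //; rewrite !mulr_ge0 ?ler0n // invr_ge0 /y exprn_ge0 //.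
have hD : (N%:R * (2 * N%:R * y^-1)) * (4 * y) = 8 * N%:R * N%:R.
  have -> : (N%:R * (2 * N%:R * y^-1)) * (4 * y) = 8 * N%:R * N%:R * (y^-1 * y) by ring.
  by rewrite mulVf // mulr1.
lra.
Qed.

End Basics.

Local Open Scope classical_set_scope.
Local Open Scope ring_scope.

Lemma cvg_sum_fin (R : realType) (I : finType) (P : pred I) (u : I -> nat -> R) (l : I -> R) :
  (forall i, u i @ \oo --> l i) -> (fun k => \sum_(i | P i) u i k) @ \oo --> \sum_(i | P i) l i.
Proof. move=> H; apply: cvg_big => //; exact: add_continuous. Qed.

Unset Implicit Arguments.

Theorem theorem1 (R : realType) (N : nat) (E : rel 'I_N)
  (Hirr : forall i : 'I_N, ~~ E i i)
  (Hsc : strongly_connected E) :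
  (exists Ainf : 'I_N -> 'I_N -> R,
      (forall i j : 'I_N, (fun k => Aseq R E k i j) @ \oo --> Ainf i j) /\
      compliant E Ainf /\ weight_balanced E Ainf) /\
  (exists (C : R) (K : nat), forall k : nat, (K <= k)%N ->
      imbalance_norm1 R E k <= C / k%:R).
Proof.
have [C [K [hC0 [hK Hrate]]]] := @rate R N E Hsc.
split; last by exists C, K.
have Hb0 : forall i, (fun k => balance E (Aseq R E k) i) @ \oo --> 0.
  move=> i; apply/cvgrPdist_le => eps heps.
  have hb := archi_boundP (divr_ge0 hC0 (ltW heps)).
  set k0 := Num.Def.archi_bound (C / eps) in hb.
  exists (maxn K k0.+1) => // k /= hk.
  rewrite sub0r normrN.
  have hkK : (K <= k)%N by rewrite geq_max in hk; case/andP: hk.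
  have hk0 : (k0 < k)%N by rewrite geq_max in hk; case/andP: hk.
  apply: le_trans (@bb_le_MM R N E k i) _.
  apply: le_trans (Hrate k hkK) _.
  have hkp : (0 < k)%N by apply: leq_trans hK hkK.
  rewrite ler_pdivrMr ?ltr0n //.
  rewrite ltr_pdivrMr // in hb.
  have : (k0%:R : R) <= k%:R by rewrite ler_nat ltnW.
  move=> h; have := ler_wpM2r (ltW heps) h; lra.
pose Ainf := fun i j => sup (range (fun k => Aseq R E k i j)).
have hub : forall i j, has_ubound (range (fun k => Aseq R E k i j)).
  move=> i j; case: (@wbound R N E Hsc i j) => W hW; exists W => _ [k _ <-]; exact: hW.
have Hcvg : forall i j, (fun k => Aseq R E k i j) @ \oo --> Ainf i j.
  move=> i j; apply: nondecreasing_cvgn (hub i j) => a b hab; exact: Aseq_mono.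
exists Ainf; split => //; split.
  move=> i j; split => h.
    have h0 : range (fun k => Aseq R E k i j) (Aseq R E 0 i j) by exists 0%N.
    apply: le_trans (ub_le_sup (hub i j) h0).
    by rewrite /= /A0 h ler01.
  have hu : (fun k => Aseq R E k i j) = (fun _ => 0).
    by apply/funext => k; rewrite Aseq_nonedge.
  rewrite /Ainf hu; apply/eqP; rewrite eq_le; apply/andP; split.
    by apply: ge_sup; [exists 0, 0%N | move=> _ [k _ <-]].
  apply: ub_le_sup; [by exists 0 => _ [k _ <-] | by exists 0%N].
move=> i.
have hb : (fun k => balance E (Aseq R E k) i) @ \oo --> balance E Ainf i.
  rewrite /balance; apply: cvgB; apply: cvg_sum_fin => j; exact: Hcvg.
have e : balance E Ainf i = 0.
  apply: (cvg_unique _ hb (Hb0 i)); exact: norm_hausdorff.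
by apply/eqP; rewrite -subr_eq0; apply/eqP; exact: e.
Qed.
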